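(* Let $G\in\mathcal{C}$ and let $N,N'$ be distinct normal subgroups of $G$. If $(H,H,\vartheta)\in\mathcal{L}_N$ and $(H',H',\vartheta')\in\mathcal{L}_{N'}$, then the Shoda pairs $(H,\ker\vartheta)$ and $(H',\ker\vartheta')$ of $G$ are not equivalent, i.e. they do not realize the same primitive central idempotent of $\mathbb{Q}G$.
   Context: All groups are finite. $\mathcal{C}$ is the class of finite groups $G$ such that every subgroup and quotient group of $G$ is either abelian or contains a non-central abelian normal subgroup. $\psi^x(g)=\psi(xgx^{-1})$, $\psi^G$ induced character, $1_N$ trivial character. A Shoda pair of $G$ is $(H,K)$ with $K\unlhd H\le G$, $H/K$ cyclic, and $g\in G$, $[H,g]\cap H\subseteq K$ imply $g\in H$; it realizes the primitive central idempotent $e_{\mathbb{Q}}(\psi^G)$ where $\psi$ is a linear character of $H$ with kernel $K$ and $e_{\mathbb{Q}}(\chi)=\frac{\chi(1)}{|G|}\sum_{\sigma\in\operatorname{Gal}(\mathbb{Q}(\chi)/\mathbb{Q})}\sum_{g\in G}\sigma(\chi(g))g^{-1}$. An $N$-linear character triple of $G$ is $(H,A,\vartheta)$ with $H\le G$, $A\unlhd H$, $\vartheta$ a linear character of $A$ invariant in $H$, and $\ker(\vartheta^G)=N$. For $B\unlhd M\le G$ and linear $\lambda$ on $B$, $\widetilde{\operatorname{Lin}}(M|\lambda)$ is the set of linear characters of $M$ whose restriction to $B$ contains $\lambda$ and whose induction to $G$ has kernel $N$. For each triple a normal subgroup $\mathcal{A}=\mathcal{A}_{(H,A,\vartheta)}$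 of $H$ is fixed, of maximal order among normal subgroups of $H$ containing $\ker\vartheta$ with abelian quotient by $\ker\vartheta$. $\operatorname{Aut}(\mathbb{C}|\vartheta)\times H$ acts on $\widetilde{\operatorname{Lin}}(\mathcal{A}|\vartheta)$ by $(\sigma,h)\cdot\varphi=\sigma\circ\varphi^h$ ($\sigma$ a field automorphism of $\mathbb{C}$ fixing $\mathbb{Q}(\vartheta)$); fix orbit representatives $\mathfrak{Lin}(\mathcal{A}|\vartheta)$. If $H\neq A$, $Cl(H,A,\vartheta)=\{(I_H(\varphi),\mathcal{A},\varphi):\varphi\in\mathfrak{Lin}(\mathcal{A}|\vartheta)\}$, $I_H(\varphi)=\{h\in H:\varphi^h=\varphi\}$; if $H=A$, empty. $\mathcal{G}_N$ is the directed graph of $N$-linear triples reachable from $(G,N,1_N)$, with edges $(u,v)$ whenever $v\in Cl(u)$. $\mathcal{L}_N$ is the set of vertices of $\mathcal{G}_N$ of the form $(H,H,\vartheta)$; for these $(H,\ker\vartheta)$ is a Shoda pair of $G$. *)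

(* Defs.v *)
From HB Require Import structures.
From mathcomp Require Import all_boot all_order all_algebra all_fingroup.
From mathcomp Require Import all_solvable all_field all_character.
From Stdlib Require Import ClassicalEpsilon.

Set Implicit Arguments.
Unset Strict Implicit.
Unset Printing Implicit Defensive.

Import GRing.Theory Num.Theory.
Local Open Scope group_scope.
Local Open Scope ring_scope.

Section Defs.

Variable gT : finGroupType.

Definition abelian_or_noncentral_abelian_normal (rT : finGroupType)
    (X : {set rT}) : Prop :=
  abelian X \/
  exists A : {group rT}, [/\ A <| X, abelian A & ~~ (A \subset 'Z(X))].

Definition in_class_C (G : {group gT}) : Prop :=
  (forall H : {group gT}, H \subset G -> abelian_or_noncentral_abelian_normal H)
  /\ (forall K : {group gT}, K <| G ->
        abelian_or_noncentral_abelian_normal (G / K)%g).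

Record triple := Triple {
  tH : {group gT};
  tA : {group gT};
  tth : 'CF(tA)
}.

Definition linear_triple (G : {group gT}) (t : triple) : Prop :=
  [/\ tH t \subset G, tA t <| tH t, tth t \is a linear_char &
      forall h, h \in tH t -> (tth t ^ h)%CF = tth t].

Definition N_linear_triple (G N : {group gT}) (t : triple) : Prop :=
  linear_triple G t /\ cfker ('Ind[G] (tth t)) = N.

(* Specification of the fixed choice A_(H,A,theta): a normal subgroup of H of
   maximal order among normal subgroups of H containing ker theta with abelian
   quotient by ker theta. *)
Definition calA_spec (H K M : {group gT}) : Prop :=
  [/\ M <| H, K \subset M, abelian (M / K)%g &
      forall M' : {group gT}, M' <| H -> K \subset M' -> abelian (M' / K)%g ->
        #|M'| <= #|M| ]%N.

Definition tLin (G N M B : {group gT}) (lambda : 'CF(B)) (phi : 'CF(M)) : Prop :=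
  [/\ phi \is a linear_char, '['Res[B] phi, lambda] != 0 &
      cfker ('Ind[G] phi) = N].

Definition same_orbit (H B M : {group gT}) (theta : 'CF(B))
    (phi1 phi2 : 'CF(M)) : Prop :=
  exists u : {rmorphism algC -> algC}, cfAut u theta = theta /\
  exists2 h, h \in H & phi2 = cfAut u (phi1 ^ h)%CF.

Definition orbit_reps (G N H B M : {group gT}) (theta : 'CF(B))
    (reps : seq 'CF(M)) : Prop :=
  [/\ forall phi, phi \in reps -> tLin G N theta phi,
      forall phi, tLin G N theta phi ->
        exists2 psi, psi \in reps & same_orbit H theta psi phi &
      forall psi1 psi2, psi1 \in reps -> psi2 \in reps ->
        same_orbit H theta psi1 psi2 -> psi1 = psi2].

Section Graph.

Variables (G N : {group gT}) (calA : triple -> {group gT})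
          (reps : forall t : triple, seq 'CF(calA t)).

(* Edge (t, v) of the graph G_N: v \in Cl(t). Cl(t) is empty when H = A. *)
Definition edge (t v : triple) : Prop :=
  (tH t :!=: tA t) /\
  exists2 phi, phi \in reps t &
    v = Triple ('I_(tH t)[phi])%G phi.

Inductive reachable : triple -> Prop :=
  | reach_base : reachable (@Triple G N 1)
  | reach_step t v : reachable t -> edge t v -> reachable v.

Definition in_L (t : triple) : Prop := reachable t /\ tH t = tA t.

End Graph.

(* e_Q(chi), as an element of QG, represented by its coefficient function
   gT -> algC (supported on G): the coefficient of x is
   chi(1)/|G| * sum_{sigma in Gal(Q(chi)/Q)} sigma(chi(x^-1)).
   The sum over Gal(Q(chi)/Q) is computed as the sum over the distinct
   Galois conjugates sigma o chi of chi (sigma |-> sigma o chi is a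
   bijection from Gal(Q(chi)/Q) onto them). *)
Definition is_galois_conjugate (G : {group gT}) (chi psi : 'CF(G)) : Prop :=
  exists u : {rmorphism algC -> algC}, psi = cfAut u chi.

Definition galois_conjugates (G : {group gT}) (chi : 'CF(G)) : seq 'CF(G) :=
  epsilon (inhabits [::])
    (fun s => uniq s /\ forall psi, psi \in s <-> is_galois_conjugate chi psi).

Definition eQ (G : {group gT}) (chi : 'CF(G)) : gT -> algC :=
  fun x => if x \in G then
             chi 1%g / #|G|%:R * \sum_(psi <- galois_conjugates chi) psi (x^-1)%g
           else 0.

End Defs.

Arguments eQ [gT] G chi _.

(* Main.v *)
Require Import Defs.
From HB Require Import structures.
From mathcomp Require Import all_boot all_order all_algebra all_fingroup.
From mathcomp Require Import all_solvable all_field all_character.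
From Stdlib Require Import ClassicalEpsilon.

Import GRing.Theory Num.Theory.
Local Open Scope group_scope.
Local Open Scope ring_scope.

Lemma normC_sum_upper_seq (T : eqType) (s : seq T) (F Gf : T -> algC) :
  (forall p, p \in s -> `|F p| <= Gf p) ->
  \sum_(p <- s) F p = \sum_(p <- s) Gf p -> forall p, p \in s -> F p = Gf p.
Proof.
move=> le eqs p /(nthP p) [i lti <-].
rewrite !(big_nth p) !big_mkord in eqs.
have := @normC_sum_upper _ _ predT (fun i : 'I_(size s) => F (nth p s i))
  (fun i : 'I_(size s) => Gf (nth p s i)) _ eqs (Ordinal lti) isT.
apply=> j _; apply: le; exact: mem_nth.
Qed.

Lemma conj_list_exists (gT : finGroupType) (G : {group gT}) (chi : 'CF(G)) :
  chi \is a character ->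
  exists s : seq 'CF(G),
    uniq s /\ forall psi, psi \in s <-> is_galois_conjugate chi psi.
Proof.
move=> Nchi.
pose f (g : {ffun Iirr G -> Iirr G}) : 'CF(G) :=
  \sum_i '[chi, 'chi_i] *: 'chi_(g i).
pose l := [seq f g | g <- enum {ffun Iirr G -> Iirr G}].
pose P psi := if excluded_middle_informative (is_galois_conjugate chi psi)
              then true else false.
exists (undup [seq p <- l | P p]); split; first exact: undup_uniq.
move=> psi; rewrite mem_undup mem_filter /P.
case: excluded_middle_informative => [c | nc]; last by split.
split=> // _; change (psi \in l); case: c => u ->; apply/mapP; exists [ffun i => aut_Iirr u i]; first by rewrite mem_enum.
rewrite /f {1}(cfun_sum_cfdot chi) raddf_sum; apply: eq_bigr => i _.
rewrite ffunE aut_IirrE; have E := cfAutZ_Cnat u (G:=G) (z := (cfdot chi (tnth (irr G) i))) (tnth (irr G) i) (Cnat_cfdot_char_irr i Nchi).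
exact: E.
Qed.

Lemma eQ_ker (gT : finGroupType) (G : {group gT}) (chi : 'CF(G)) :
  chi \is a character -> chi 1%g != 0 ->
  cfker chi = [set x in G | eQ G chi x == eQ G chi 1%g].
Proof.
move=> Nchi chi1.
have [_ Hs] : uniq (galois_conjugates chi) /\
   forall psi, psi \in galois_conjugates chi <-> is_galois_conjugate chi psi.
  have := epsilon_spec (inhabits [::]) _ (@conj_list_exists _ _ chi Nchi).
  by [].
set s := galois_conjugates chi in Hs *.
have chis : chi \in s.
  apply/Hs; exists (idfun : {rmorphism algC -> algC}).
  by apply/cfunP => y; rewrite cfunE.
have kerpsi : forall psi y, psi \in s -> y \in G ->
    (y \in cfker chi) = (psi y == psi 1%g).
  move=> psi y /Hs [u ->] Gy.
  by rewrite -(cfker_aut u) cfkerEchar ?cfAut_char // inE Gy.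
apply/setP => x; rewrite [RHS]inE /eQ group1.
case Gx: (x \in G); last first.
  rewrite /=; apply: negbTE; apply: contraFN Gx; exact: (subsetP (cfker_sub chi)).
rewrite /= invg1 (inj_eq (mulfI _)); last first.
  by rewrite mulf_neq0 // invr_eq0 neq0CG.
have Gxi : (x^-1)%g \in G by rewrite groupV.
apply/idP/eqP.
  move=> Kx; apply: eq_big_seq => psi ps; apply/eqP.
  by rewrite -kerpsi // groupV.
move=> eqS; rewrite -groupV (kerpsi chi) //; apply/eqP.
apply: (@normC_sum_upper_seq _ s (fun psi : 'CF(G) => psi (x^-1)%g) (fun psi : 'CF(G) => psi 1%g) _ eqS chi chis) => psi /Hs [u ->].
by apply: char1_ge_norm; rewrite cfAut_char.
Qed.

Lemma reach_Nlin (gT : finGroupType) (G N : {group gT})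
    (calA : triple gT -> {group gT})
    (reps : {group gT} -> forall t : triple gT, seq 'CF(calA t)) :
  (forall t, linear_triple G t -> calA_spec (tH t) (cfker (tth t)) (calA t)) ->
  (forall (M : {group gT}) t, M <| G -> N_linear_triple G M t ->
     orbit_reps G M (tH t) (tth t) (reps M t)) ->
  N <| G -> forall t, reachable G N (reps N) t -> N_linear_triple G N t.
Proof.
move=> HA Hreps nNG t; elim=> [|t0 v _ IH [_ [phi phiR ->]]].
  split.
    split=> //=; first exact: cfun1_lin_char.
    by move=> h _; rewrite cfConjg_cfun1.
  rewrite /= cfker_Ind ?normal_sub ?cfun1_char ?oner_neq0 // cfker_cfun1.
  apply/eqP; rewrite eqEsubset gcore_sub gcore_max ?normal_norm //.
have [[sHG nAH lin inv] _] := IH.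
have [tl _ _] := Hreps N t0 nNG IH.
have [lphi _ kphi] := tl phi phiR.
have := HA t0 (proj1 IH); rewrite /calA_spec => -[nCH _ _ _].
split=> //; split=> //=.
- exact: subset_trans (Inertia_sub _ _) sHG.
- apply: (normalS _ _ nCH); last exact: Inertia_sub.
  exact: sub_Inertia (normal_sub nCH).
- by move=> h /setIP [_ hI]; apply: inertiaJ.
Qed.

Lemma ker_eQ (gT : finGroupType) (G N : {group gT})
    (calA : triple gT -> {group gT})
    (reps : {group gT} -> forall t : triple gT, seq 'CF(calA t)) :
  (forall t, linear_triple G t -> calA_spec (tH t) (cfker (tth t)) (calA t)) ->
  (forall (M : {group gT}) t, M <| G -> N_linear_triple G M t ->
     orbit_reps G M (tH t) (tth t) (reps M t)) ->
  N <| G -> forall t, in_L G N (reps N) t ->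
  N = [set x in G | eQ G ('Ind[G] (tth t)) x == eQ G ('Ind[G] (tth t)) 1%g] :> {set gT}.
Proof.
move=> HA Hreps nNG t [rt _].
have [[sHG nAH lin _] kt] := @reach_Nlin _ G N calA reps HA Hreps nNG t rt.
have sAG : tA t \subset G := subset_trans (normal_sub nAH) sHG.
rewrite -eQ_ker ?kt //.
- exact: cfInd_char (lin_charW lin).
- by rewrite cfInd1 // lin_char1 // mulr1 pnatr_eq0 -lt0n indexg_gt0.
Qed.

Theorem lemma4 (gT : finGroupType) (G N N' : {group gT})
    (calA : triple gT -> {group gT})
    (reps : {group gT} -> forall t : triple gT, seq 'CF(calA t)) :
  in_class_C G ->
  (forall t, linear_triple G t -> calA_spec (tH t) (cfker (tth t)) (calA t)) ->
  (forall (M : {group gT}) t, M <| G -> N_linear_triple G M t ->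
     orbit_reps G M (tH t) (tth t) (reps M t)) ->
  N <| G -> N' <| G -> (N :!=: N') ->
  forall t t' : triple gT,
    in_L G N (reps N) t -> in_L G N' (reps N') t' ->
    eQ G ('Ind[G] (tth t)) <> eQ G ('Ind[G] (tth t')).
Proof.
move=> _ HA Hreps nN nN' neq t t' Lt Lt' E.
move: neq; rewrite (@ker_eQ _ G N calA reps HA Hreps nN t Lt) (@ker_eQ _ G N' calA reps HA Hreps nN' t' Lt') E.
by rewrite eqxx.
Qed.
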